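(* Let $n_1<n_2<n_3$ be positive integers with $\gcd(n_1,n_2,n_3)=1$ minimally generating a nonsymmetric numerical semigroup $S$, with $\gcd(\delta_1,\delta_3)=1$. Let $\mathbf x\in\{\boldsymbol\lambda,\boldsymbol\mu\}$ and let $1\le i\le\max\{\delta_1,\delta_3\}$ be such that the B\'ezout couple $\mathbf x_i$ (of type $\mathbf x$) is reducible. Then there exists a positive integer $l<i$ such that $\tau_{\mathbf x_l}^-\le\tau_{\mathbf x_i}^-$ (componentwise), where $\mathbf x_l$ is the B\'ezout couple of $l$ of the same type.
   Context: $S=\langle n_1,n_2,n_3\rangle$; minimally generated means no $n_i$ lies in the submonoid generated by the other two; $S$ is symmetric if, with $F=\max(\mathbb Z\setminus S)$, $x\in\mathbb Z\setminus S$ implies $F-x\in S$. For $\{i,j,k\}=\{1,2,3\}$, $c_i=\min\{c\in\mathbb Z^+: cn_i\in\langle n_j,n_k\rangle\}$ and, $S$ being nonsymmetric, $r_{ij},r_{ik}$ are the unique positive integers with $c_in_i=r_{ij}n_j+r_{ik}n_k$; moreover $c_i=r_{ji}+r_{ki}$. Set $\delta_1=c_1-r_{12}-r_{13}>0$, $\delta_3=r_{31}+r_{32}-c_3>0$, $\mathbf v_1=(c_1,-r_{12},-r_{13})$, $\mathbf v_3=(r_{31},r_{32},-c_3)$. For $i\in\{1,\ldots,\max\{\delta_1,\delta_3\}\}$: $\boldsymbol\lambda_i$ is the unique $(a,b)\in\mathbb Z^2$ with $a\delta_1+b\delta_3=i$, $0<b\le\delta_1$; $\boldsymbol\mu_i$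 is the unique $(a,b)$ with $a\delta_1+b\delta_3=i$, $0<a\le\delta_3$. $\boldsymbol\lambda_i$ is reducible if $\boldsymbol\lambda_i=\boldsymbol\lambda_j+\boldsymbol\lambda_k$ for some $j,k\in\{1,\ldots,\max\{\delta_1,\delta_3\}\}$, and similarly for $\boldsymbol\mu_i$. For $(a,b)\in\mathbb Z^2$, $\tau_{(a,b)}=a\mathbf v_1+b\mathbf v_3\in\mathbb Z^3$. For $\mathbf z\in\mathbb Z^3$, $\mathbf z^+,\mathbf z^-\in\mathbb N^3$ are the unique vectors with $\mathbf z=\mathbf z^+-\mathbf z^-$ and $\mathbf z^+\cdot\mathbf z^-=0$. *)

(* Defs.v *)
From mathcomp Require Import all_boot all_order all_algebra.
Set Implicit Arguments. Unset Strict Implicit. Unset Printing Implicit Defensive.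
Import Order.TTheory GRing.Theory Num.Theory.
Local Open Scope ring_scope.

Definition in_sg2 (a b x : nat) : Prop :=
  exists p q : nat, x = (p * a + q * b)%N.

Definition in_sg3 (n1 n2 n3 : nat) (x : int) : Prop :=
  exists p q r : nat, x = ((p * n1 + q * n2 + r * n3)%N)%:Z.

Definition minimally_generated (n1 n2 n3 : nat) : Prop :=
  ~ in_sg2 n2 n3 n1 /\ ~ in_sg2 n1 n3 n2 /\ ~ in_sg2 n1 n2 n3.

Definition is_frobenius (n1 n2 n3 : nat) (F : int) : Prop :=
  ~ in_sg3 n1 n2 n3 F /\ (forall x : int, ~ in_sg3 n1 n2 n3 x -> x <= F).

Definition symmetric_sg (n1 n2 n3 : nat) : Prop :=
  forall F : int, is_frobenius n1 n2 n3 F ->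
  forall x : int, ~ in_sg3 n1 n2 n3 x -> in_sg3 n1 n2 n3 (F - x).

Definition is_c (ni nj nk c : nat) : Prop :=
  (0 < c)%N /\ in_sg2 nj nk (c * ni) /\
  (forall c' : nat, (0 < c')%N -> in_sg2 nj nk (c' * ni) -> (c <= c')%N).

Inductive btype := Lambda | Mu.

Definition bezout (t : btype) (d1 d3 i : int) (x : int * int) : Prop :=
  x.1 * d1 + x.2 * d3 = i /\
  match t with
  | Lambda => 0 < x.2 <= d1
  | Mu => 0 < x.1 <= d3
  end.

Definition reducible (t : btype) (d1 d3 : int) (x : int * int) : Prop :=
  exists (j k : int) (xj xk : int * int),
    1 <= j <= Num.max d1 d3 /\ 1 <= k <= Num.max d1 d3 /\
    bezout t d1 d3 j xj /\ bezout t d1 d3 k xk /\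
    x = (xj.1 + xk.1, xj.2 + xk.2).

(* tau_(a,b) = a v1 + b v3, v1 = (c1,-r12,-r13), v3 = (r31,r32,-c3) *)
Definition tau (c1 r12 r13 r31 r32 c3 : int) (x : int * int) : int * int * int :=
  (x.1 * c1 + x.2 * r31, - (x.1 * r12) + x.2 * r32, - (x.1 * r13) - x.2 * c3).

Definition negpart (z : int) : int := Num.max (- z) 0.

Definition neg_le (z w : int * int * int) : Prop :=
  negpart z.1.1 <= negpart w.1.1 /\ negpart z.1.2 <= negpart w.1.2 /\
  negpart z.2 <= negpart w.2.

(* Main.v *)
Require Import Defs.
From mathcomp Require Import all_boot all_order all_algebra.
From mathcomp Require Import zify ring lra.
Import Order.TTheory GRing.Theory Num.Theory.
Local Open Scope ring_scope.

Lemma pick23 (u1 u2 u3 w1 w2 w3 : int) :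
  ((u2 <= 0 /\ w2 <= 0) \/ (0 <= u2 /\ 0 <= w2)) ->
  ((u3 <= 0 /\ w3 <= 0) \/ (0 <= u3 /\ 0 <= w3)) ->
  neg_le (u1, u2, u3) (u1 + w1, u2 + w2, u3 + w3) \/
  neg_le (w1, w2, w3) (u1 + w1, u2 + w2, u3 + w3).
Proof. rewrite /neg_le /negpart /= => H2 H3; lia. Qed.

Lemma pick12 (u1 u2 u3 w1 w2 w3 : int) :
  ((u1 <= 0 /\ w1 <= 0) \/ (0 <= u1 /\ 0 <= w1)) ->
  ((u2 <= 0 /\ w2 <= 0) \/ (0 <= u2 /\ 0 <= w2)) ->
  neg_le (u1, u2, u3) (u1 + w1, u2 + w2, u3 + w3) \/
  neg_le (w1, w2, w3) (u1 + w1, u2 + w2, u3 + w3).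
Proof. rewrite /neg_le /negpart /= => H2 H3; lia. Qed.

Lemma key_lt (A B n1 n2 : int) : A * n1 = B * n2 -> 0 < n1 -> n1 < n2 -> 0 < B -> B < A.
Proof. move=> *; nia. Qed.

Lemma lam_facts (d1 d3 r12 r13 r32 c3 l a b : int) :
  0 < d1 -> 0 < d3 -> 0 < r32 -> 0 <= r12 -> 0 <= r13 -> r13 * d3 < c3 * d1 ->
  1 <= l <= Num.max d1 d3 -> a * d1 + b * d3 = l -> 0 < b <= d1 ->
  0 < - (a * r12) + b * r32 /\ - (a * r13) - b * c3 < 0.
Proof.
move=> h1 h3 h32 h12 h13 K hl hab hb.
have ha : a <= 0.
  case: (lerP a 0) => // ha.
  have : d1 <= a * d1 by nia.
  have : d3 <= b * d3 by nia.
  lia.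
split; first by nia.
have : 0 < d1 * (a * r13 + b * c3).
  have e : d1 * (a * r13 + b * c3) = r13 * l + b * (c3 * d1 - r13 * d3)
    by rewrite -hab; ring.
  rewrite e; nia.
nia.
Qed.

Lemma mu_facts (d1 d3 c1 r12 r31 r32 l a b : int) :
  0 < d1 -> 0 < d3 -> 0 < r12 -> 0 <= r32 -> 0 <= r31 -> r31 * d1 < c1 * d3 ->
  1 <= l <= Num.max d1 d3 -> a * d1 + b * d3 = l -> 0 < a <= d3 ->
  - (a * r12) + b * r32 < 0 /\ 0 < a * c1 + b * r31.
Proof.
move=> h1 h3 h12 h32 h31 K hl hab hb.
have ha : b <= 0.
  case: (lerP b 0) => // ha.
  have : d1 <= a * d1 by nia.
  have : d3 <= b * d3 by nia.
  lia.
split; first by nia.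
have : 0 < d3 * (a * c1 + b * r31).
  have e : d3 * (a * c1 + b * r31) = r31 * l + a * (c1 * d3 - r31 * d1)
    by rewrite -hab; ring.
  rewrite e; nia.
nia.
Qed.

Theorem lemma2p13 (n1 n2 n3 : nat) (c1 r12 r13 c3 r31 r32 : nat)
  (t : btype) (i : int) (xi : int * int) :
  (0 < n1)%N -> (n1 < n2)%N -> (n2 < n3)%N ->
  gcdn (gcdn n1 n2) n3 = 1%N ->
  minimally_generated n1 n2 n3 ->
  ~ symmetric_sg n1 n2 n3 ->
  is_c n1 n2 n3 c1 -> (0 < r12)%N -> (0 < r13)%N ->
  (c1 * n1 = r12 * n2 + r13 * n3)%N ->
  is_c n3 n1 n2 c3 -> (0 < r31)%N -> (0 < r32)%N ->
  (c3 * n3 = r31 * n1 + r32 * n2)%N ->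
  let d1 : int := c1%:Z - r12%:Z - r13%:Z in
  let d3 : int := r31%:Z + r32%:Z - c3%:Z in
  0 < d1 -> 0 < d3 ->
  gcdz d1 d3 = 1 ->
  1 <= i <= Num.max d1 d3 ->
  bezout t d1 d3 i xi ->
  reducible t d1 d3 xi ->
  exists (l : int) (xl : int * int),
    0 < l < i /\ bezout t d1 d3 l xl /\
    neg_le (tau c1%:Z r12%:Z r13%:Z r31%:Z r32%:Z c3%:Z xl)
           (tau c1%:Z r12%:Z r13%:Z r31%:Z r32%:Z c3%:Z xi).
Proof.
move=> hn1 hn12 hn23 _ _ _ _ hr12 hr13 E1 _ hr31 hr32 E3 d1 d3.
have Ed1 : d1 = c1%:Z - r12%:Z - r13%:Z by [].
have Ed3 : d3 = r31%:Z + r32%:Z - c3%:Z by [].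
clearbody d1 d3.
move=> hd1 hd3 _ hi [Hbi Hti]
  [j [k [[aj bj] [[ak bk] [hj [hk [[Hbj Htj] [[Hbk Htk] Hx]]]]]]]].
move: Hbi Hti; rewrite Hx /= => Hbi Hti.
rewrite /= in Hbj Hbk Htj Htk.
have E1z : c1%:Z * n1%:Z = r12%:Z * n2%:Z + r13%:Z * n3%:Z.
  by rewrite -!PoszM -PoszD E1.
have E3z : c3%:Z * n3%:Z = r31%:Z * n1%:Z + r32%:Z * n2%:Z.
  by rewrite -!PoszM -PoszD E3.
have K1 : r13%:Z * d3 < c3%:Z * d1.
  have e : c3%:Z * d1 - r13%:Z * d3 = (c3%:Z * c1%:Z - r13%:Z * r31%:Z)
     - (c3%:Z * r12%:Z + r13%:Z * r32%:Z) by rewrite Ed1 Ed3; ring.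
  suff : c3%:Z * r12%:Z + r13%:Z * r32%:Z < c3%:Z * c1%:Z - r13%:Z * r31%:Z.
    by move=> HH; lia.
  apply: (@key_lt _ _ n1%:Z n2%:Z); [|lia|lia|nia].
  have -> : (c3%:Z * c1%:Z - r13%:Z * r31%:Z) * n1%:Z
    = c3%:Z * (c1%:Z * n1%:Z) - r13%:Z * (r31%:Z * n1%:Z) by ring.
  rewrite E1z.
  have -> : r31%:Z * n1%:Z = c3%:Z * n3%:Z - r32%:Z * n2%:Z by rewrite E3z; ring.
  ring.
have K2 : r31%:Z * d1 < c1%:Z * d3.
  have e : c1%:Z * d3 - r31%:Z * d1 = (r31%:Z * r12%:Z + c1%:Z * r32%:Z)
     - (c1%:Z * c3%:Z - r31%:Z * r13%:Z) by rewrite Ed1 Ed3; ring.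
  suff : c1%:Z * c3%:Z - r31%:Z * r13%:Z < r31%:Z * r12%:Z + c1%:Z * r32%:Z.
    by move=> HH; lia.
  case: (ltrP 0 (c1%:Z * c3%:Z - r31%:Z * r13%:Z)) => hB; last by nia.
  apply: (@key_lt _ _ n2%:Z n3%:Z); try lia.
  have -> : (c1%:Z * c3%:Z - r31%:Z * r13%:Z) * n3%:Z
    = c1%:Z * (c3%:Z * n3%:Z) - r31%:Z * (r13%:Z * n3%:Z) by ring.
  rewrite E3z.
  have -> : r13%:Z * n3%:Z = c1%:Z * n1%:Z - r12%:Z * n2%:Z by rewrite E1z; ring.
  ring.
have hijk : i = j + k by rewrite -Hbi -Hbj -Hbk; ring.
have Htau : forall a1 b1 a2 b2 : int,
   tau c1%:Z r12%:Z r13%:Z r31%:Z r32%:Z c3%:Z (a1 + a2, b1 + b2) =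
   ((a1 * c1%:Z + b1 * r31%:Z) + (a2 * c1%:Z + b2 * r31%:Z),
    (- (a1 * r12%:Z) + b1 * r32%:Z) + (- (a2 * r12%:Z) + b2 * r32%:Z),
    (- (a1 * r13%:Z) - b1 * c3%:Z) + (- (a2 * r13%:Z) - b2 * c3%:Z)).
  by move=> a1 b1 a2 b2; rewrite /tau /=; congr (_, _, _); ring.
rewrite Htau.
case: t Hti Htj Htk => /= Hti Htj Htk.
- have [yj zj] := @lam_facts d1 d3 r12 r13 r32 c3 j aj bj hd1 hd3
    ltac:(lia) ltac:(lia) ltac:(lia) K1 hj Hbj Htj.
  have [yk zk] := @lam_facts d1 d3 r12 r13 r32 c3 k ak bk hd1 hd3
    ltac:(lia) ltac:(lia) ltac:(lia) K1 hk Hbk Htk.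
  have [H|H] := @pick23 (aj * c1%:Z + bj * r31%:Z) (- (aj * r12%:Z) + bj * r32%:Z)
    (- (aj * r13%:Z) - bj * c3%:Z) (ak * c1%:Z + bk * r31%:Z)
    (- (ak * r12%:Z) + bk * r32%:Z) (- (ak * r13%:Z) - bk * c3%:Z)
    ltac:(lia) ltac:(lia).
  + exists j, (aj, bj); split; first lia.
    by split; [split | exact: H].
  + exists k, (ak, bk); split; first lia.
    by split; [split | exact: H].
- have [yj zj] := @mu_facts d1 d3 c1 r12 r31 r32 j aj bj hd1 hd3
    ltac:(lia) ltac:(lia) ltac:(lia) K2 hj Hbj Htj.
  have [yk zk] := @mu_facts d1 d3 c1 r12 r31 r32 k ak bk hd1 hd3
    ltac:(lia) ltac:(lia) ltac:(lia) K2 hk Hbk Htk.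
  have [H|H] := @pick12 (aj * c1%:Z + bj * r31%:Z) (- (aj * r12%:Z) + bj * r32%:Z)
    (- (aj * r13%:Z) - bj * c3%:Z) (ak * c1%:Z + bk * r31%:Z)
    (- (ak * r12%:Z) + bk * r32%:Z) (- (ak * r13%:Z) - bk * c3%:Z)
    ltac:(lia) ltac:(lia).
  + exists j, (aj, bj); split; first lia.
    by split; [split | exact: H].
  + exists k, (ak, bk); split; first lia.
    by split; [split | exact: H].
Qed.
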